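(* Let $m\ge 2$ and $\alpha\in[0,1]$. There exists a deterministic voting rule $f$ such that every election $\mathcal E=(N,A,\vec\sigma)$ with $m$ alternatives, in which every agent $i$ has an intensity rank $\ell_i\in[m-1]$, satisfies $$\mathsf{dist}_\alpha(f(\vec\sigma),\mathcal E)\le 2+\max(\alpha,t_{\ell_{\max}}),\qquad\text{where } \ell_{\max}=\max_{i\in N}\ell_i.$$
   Context: An election $\mathcal E=(N,A,\vec\sigma)$ has $n$ agents $N$, $m$ alternatives $A$, and $\sigma_i=(\pi_i,\Join_i)$, where $\pi_i:[m]\to A$ is a bijection ($\pi_i(1)$ most preferred) and $\Join_i:[m-1]\to\{\succ,\succ\!\!\succ\}$. A metric $d$ on $N\cup A$ is nonnegative and symmetric, satisfies the triangle inequality, and has $d(x,x)=0$. The profile $\vec\sigma$ is $\alpha$-consistent with $d$ (mandatory elicitation) if for all $i$ and $j\in[m-1]$: - $\Join_i(j)=\,\succ$ implies $d(i,\pi_i(j+1))\ge d(i,\pi_i(j))>\alpha d(i,\pi_i(j+1))$; - $\Join_i(j)=\,\succ\!\!\succ$ implies $d(i,\pi_i(j))\le\alpha d(i,\pi_i(j+1))$. $\mathsf{dist}_\alpha(a,\mathcal E)=\sup_d \sum_i d(i,a)/\min_b\sum_i d(i,b)$, with the supremum over $\alpha$-consistent $d$. A preference $(\pi,\Join)$ is moderate-up-to-$k$ if $\Join(k+1)=\,\succ\!\!\succ$ and $\Join(i)=\,\succ$ for all $i\in[k]$; it is moderate-up-to-$(m-1)$ if $\Join$ contains no $\succ\!\!\succ$.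 The intensity rank $\ell_i$ of agent $i$ is the $k$ for which $\sigma_i$ is moderate-up-to-$k$. Define - $w_1=\frac{\alpha+1}{3\alpha+1}$ and $t_1=\frac{1-\alpha}{3\alpha+1}$; - for $k>1$: $w_k=1-\frac{2\alpha}{(1-\alpha)t_{k-1}+2w_{k-1}+2\alpha}$ and $t_k=w_k+(1-w_k)t_{k-1}$. *)

(* Defs.v *)
From mathcomp Require Import all_boot all_order all_algebra.
From mathcomp Require Import fingroup perm.
From mathcomp Require Import all_classical all_reals.
From mathcomp Require Import ereal.
Set Implicit Arguments. Unset Strict Implicit. Unset Printing Implicit Defensive.
Import Order.TTheory GRing.Theory Num.Theory.
Local Open Scope ring_scope.

(* Positions 1..m are represented 0-indexed by 'I_m; the link index
   j in [m-1] is represented by j' : 'I_m.-1 (j = j'+1). *)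
Lemma ltn_predS_aux (m j : nat) : (j < m.-1)%N -> (j.+1 < m)%N.
Proof. by case: m. Qed.

Definition pos_lo (m : nat) (j : 'I_m.-1) : 'I_m :=
  Ordinal (ltnW (ltn_predS_aux (ltn_ord j))).
Definition pos_hi (m : nat) (j : 'I_m.-1) : 'I_m :=
  Ordinal (ltn_predS_aux (ltn_ord j)).

(* A preference sigma_i = (pi_i, Join_i): pi_i (position) = alternative,
   Join_i link = true for the strong relation (>>), false for (>). *)
Definition pref (m : nat) : Type := prod {perm 'I_m} ('I_m.-1 -> bool).

(* metric on N ∪ A (disjoint union) *)
Definition is_metric (R : realType) (n m : nat)
  (d : 'I_n + 'I_m -> 'I_n + 'I_m -> R) : Prop :=
  [/\ forall x y, 0 <= d x y,
      forall x y, d x y = d y x,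
      forall x y z, d x z <= d x y + d y z &
      forall x, d x x = 0].

Definition alpha_consistent (R : realType) (n m : nat) (alpha : R)
  (sigma : 'I_n -> pref m) (d : 'I_n + 'I_m -> 'I_n + 'I_m -> R) : Prop :=
  forall (i : 'I_n) (j : 'I_m.-1),
    let pi := (sigma i).1 in
    let dl := d (inl i) (inr (pi (pos_lo j))) in
    let dh := d (inl i) (inr (pi (pos_hi j))) in
    if (sigma i).2 j then dl <= alpha * dh
    else (dl <= dh) && (alpha * dh < dl).

Definition cost (R : realType) (n m : nat)
  (d : 'I_n + 'I_m -> 'I_n + 'I_m -> R) (a : 'I_m) : R :=
  \sum_(i < n) d (inl i) (inr a).

(* min_b sum_i d(i,b); the seed cost d a is itself one of the terms,
   so this is exactly the minimum over all b *)
Definition opt_cost (R : realType) (n m : nat)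
  (d : 'I_n + 'I_m -> 'I_n + 'I_m -> R) (a : 'I_m) : R :=
  \big[Num.min/cost d a]_(b : 'I_m) cost d b.

Definition dist_alpha (R : realType) (n m : nat) (alpha : R)
  (sigma : 'I_n -> pref m) (a : 'I_m) : \bar R :=
  ereal_sup [set x : \bar R | exists d : 'I_n + 'I_m -> 'I_n + 'I_m -> R,
     [/\ is_metric d, alpha_consistent alpha sigma d &
         x = (cost d a / opt_cost d a)%:E]].

(* moderate-up-to-k, k in [m-1] (positions 1-indexed, links 0-indexed here):
   links 1..k are weak (>), and link k+1 is strong (>>) if k <= m-2 *)
Definition moderate_upto (m : nat) (J : 'I_m.-1 -> bool) (k : nat) : Prop :=
  [/\ (1 <= k)%N, (k <= m.-1)%N,
      (forall j : 'I_m.-1, (j < k)%N -> J j = false) &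
      (forall j : 'I_m.-1, nat_of_ord j = k -> J j = true)].

(* (w_{k+1}, t_{k+1}) *)
Fixpoint wt (R : realType) (alpha : R) (k : nat) : R * R :=
  match k with
  | 0 => ((alpha + 1) / (3 * alpha + 1), (1 - alpha) / (3 * alpha + 1))
  | k'.+1 =>
      let w := (wt alpha k').1 in
      let t := (wt alpha k').2 in
      let w' := 1 - 2 * alpha / ((1 - alpha) * t + 2 * w + 2 * alpha) in
      (w', w' + (1 - w') * t)
  end.

(* t_k for k >= 1 (t 0 is an unused placeholder equal to t_1) *)
Definition t_seq (R : realType) (alpha : R) (k : nat) : R := (wt alpha k.-1).2.

(* Main.v *)
Require Import Defs.
From mathcomp Require Import all_boot all_order all_algebra.
From mathcomp Require Import fingroup perm.
From mathcomp Require Import all_classical all_reals.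
From mathcomp Require Import ereal.

From mathcomp Require Import ring lra.
From Stdlib Require Import ClassicalEpsilon Classical.
Import Order.TTheory GRing.Theory Num.Theory.
Local Open Scope ring_scope.

Section Seq.
Variable R : realType.
Variable alpha : R.
Hypothesis a0 : 0 <= alpha.
Hypothesis a1 : alpha <= 1.
Ltac hyps := have ? := a0; have ? := a1.

Fixpoint WT (k : nat) : R * R :=
  match k with
  | 0 => (1, -1)
  | k'.+1 =>
      let w := (WT k').1 in
      let t := (WT k').2 in
      let w' := 1 - 2 * alpha / ((1 - alpha) * t + 2 * w + 2 * alpha) in
      (w', w' + (1 - w') * t)
  end.
Definition W k := (WT k).1.
Definition T k := (WT k).2.

Lemma wt_WT k : wt alpha k = WT k.+1.
Proof.
hyps.
elim: k => [|k IH] /=; last by rewrite IH.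
have h : 3 * alpha + 1 != 0 by apply: lt0r_neq0; lra.
have h2 : (1 - alpha) * -1 + 2 * 1 + 2 * alpha = 3 * alpha + 1 by ring.
rewrite h2; congr pair; field => //.
Qed.

Lemma W0 : W 0 = 1. Proof. by []. Qed.
Lemma T0 : T 0 = -1. Proof. by []. Qed.
Lemma WS k : W k.+1 = 1 - 2 * alpha / ((1 - alpha) * T k + 2 * W k + 2 * alpha).
Proof. by []. Qed.
Lemma TS k : T k.+1 = W k.+1 + (1 - W k.+1) * T k.
Proof. by []. Qed.

Lemma inv_bounds k : [/\ 0 <= W k.+1, W k.+1 <= 1, 0 <= T k.+1 & T k.+1 <= 1].
Proof.
hyps.
elim: k => [|k [h1 h2 h3 h4]].
  rewrite TS WS W0 T0.
  have -> : (1 - alpha) * -1 + 2 * 1 + 2 * alpha = 3 * alpha + 1 by ring.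
  have hp : 0 < 3 * alpha + 1 by lra.
  have e : 2 * (2 * alpha / (3 * alpha + 1)) <= 1 by rewrite mulrA ler_pdivrMr //; lra.
  have e2 : 0 <= 2 * alpha / (3 * alpha + 1) by apply: divr_ge0; lra.
  split; lra.
rewrite TS WS.
set D := (1 - alpha) * T k.+1 + 2 * W k.+1 + 2 * alpha.
have hD : 2 * alpha <= D by rewrite /D; nra.
have [e1 e2] : 0 <= 2 * alpha / D /\ 2 * alpha / D <= 1.
  have [->|ap] := eqVneq alpha 0; first by rewrite mulr0 mul0r; lra.
  have ap' : 0 < alpha by rewrite lt_def ap.
  have Dp : 0 < D by lra.
  split; first by apply: divr_ge0; lra.
  by rewrite ler_pdivrMr //; lra.
set w := 1 - 2 * alpha / D.
have w0 : 0 <= w by rewrite /w; lra.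
have w1 : w <= 1 by rewrite /w; lra.
split => //; nra.
Qed.

Lemma key k : (1 - W k.+1) * (2 * W k + T k) = alpha * (T k.+1 + W k.+1).
Proof.
hyps.
rewrite TS WS.
set D := (1 - alpha) * T k + 2 * W k + 2 * alpha.
have [->|ap] := eqVneq alpha 0; first by rewrite !(mulr0, mul0r, subr0, subrr).
have ap' : 0 < alpha by rewrite lt_def ap.
have Dp : 0 < D.
  case: k @D => [|k] D; first by rewrite /D W0 T0; lra.
  by case: (inv_bounds k) => *; rewrite /D; nra.
have Dn : D != 0 by rewrite gt_eqF.
move: Dn; rewrite /D => Dn; field => //.
Qed.


Lemma cw_ge0 k : 0 <= 2 * W k + T k.
Proof.
hyps. case: k => [|k]; first by rewrite W0 T0; lra.
by case: (inv_bounds k) => *; lra.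
Qed.

Fixpoint P (k u : nat) : R :=
  match k with
  | 0 => (u == 0%N)%:R
  | k'.+1 => match u with 0 => W k | u'.+1 => (1 - W k) * P k' u' end
  end.

Lemma P_ge0 k u : 0 <= P k u.
Proof.
hyps. elim: k u => [|k IH] [|u] /=; rewrite ?ler0n //.
  by case: (inv_bounds k).
by case: (inv_bounds k) => *; apply: mulr_ge0 => //; lra.
Qed.

Lemma P_gt k u : (k < u)%N -> P k u = 0.
Proof.
elim: k u => [|k IH] [|u] //=.
by move=> h; rewrite IH // mulr0.
Qed.

Lemma P_sum k : \sum_(0 <= u < k.+1) P k u = 1.
Proof.
elim: k => [|k IH]; first by rewrite big_nat1.
rewrite big_nat_recl //=.
under eq_bigr do rewrite /=.
by rewrite -mulr_sumr IH mulr1 addrC subrK.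
Qed.

Lemma mono (x : nat -> R) K : (forall u, (u < K)%N -> x u <= x u.+1) ->
  forall u v, (u <= v)%N -> (v <= K)%N -> x u <= x v.
Proof.
move=> h u v uv vK; elim: v uv vK => [|v IH]; first by rewrite leqn0 => /eqP ->.
rewrite leq_eqVlt => /orP [/eqP -> //| uv] vK.
apply: le_trans (IH uv (ltnW vK)) _; exact: h.
Qed.

Definition Hx (x : nat -> R) k :=
  [/\ forall u, (u < k)%N -> x u <= x u.+1,
      forall u, (u < k)%N -> alpha * x u.+1 <= x u & 0 <= x 0%N].

Lemma Hx_shift x k : Hx x k.+1 -> Hx (fun u => x u.+1) k.
Proof.
case=> h1 h2 h3; split => [u uk|u uk|]; [exact: h1|exact: h2|].
by apply: le_trans h3 (h1 0%N _).
Qed.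

Lemma Bl k x : Hx x k ->
  \sum_(0 <= u < k.+1) P k u * x u <= (2 * W k + T k) * x 0%N.
Proof.
hyps.
elim: k x => [|k IH] x hx.
  by rewrite big_nat1 /= W0 T0 mul1r; lra.
have [h1 h2 h3] := hx.
rewrite big_nat_recl //=.
under eq_bigr do rewrite -mulrA.
rewrite -mulr_sumr.
have := IH _ (Hx_shift _ _ hx) => /= hS.
have hk := key k.
have [w0 w1 t0 t1] := inv_bounds k.
have c0 := cw_ge0 k.
set S := \sum_(0 <= i < k.+1) _ in hS *.
set c := 2 * W k + T k in hS hk c0.
have e1 : (1 - W k.+1) * S <= (1 - W k.+1) * (c * x 1%N) by apply: ler_wpM2l => //; lra.
have e2 : (T k.+1 + W k.+1) * (alpha * x 1%N) <= (T k.+1 + W k.+1) * x 0%N.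
  by apply: ler_wpM2l; [lra| exact: h2].
have e3 : (1 - W k.+1) * (c * x 1%N) = (T k.+1 + W k.+1) * (alpha * x 1%N).
  by transitivity (((1 - W k.+1) * c) * x 1%N); [ring| rewrite hk; ring].
have e4 : 0 <= x 0%N by [].
nra.
Qed.

Definition E (x : nat -> R) s u := if u == s then 0 else x s + x u.

Lemma Al k x s : Hx x k -> (s <= k)%N ->
  \sum_(0 <= u < k.+1) P k u * E x s u <= (1 + T k) * x s.
Proof.
hyps.
elim: k x s => [|k IH] x s hx.
  rewrite leqn0 => /eqP ->.
  by rewrite big_nat1 /E eqxx mulr0 T0 subrr mul0r.
have [h1 h2 h3] := hx.
have hx' := Hx_shift _ _ hx.
have [w0 w1 t0 t1] := inv_bounds k.
rewrite big_nat_recl //=.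
under eq_bigr do rewrite -mulrA.
rewrite -mulr_sumr.
case: s => [|s] sk.
  rewrite /E eqxx mulr0 add0r.
  under eq_bigr do rewrite /=.
  have -> : \sum_(0 <= i < k.+1) P k i * (x 0%N + x i.+1) =
     x 0%N * \sum_(0 <= i < k.+1) P k i + \sum_(0 <= i < k.+1) P k i * x i.+1.
    rewrite mulr_sumr -big_split /=; apply: eq_bigr => i _; ring.
  rewrite P_sum mulr1.
  have := Bl _ _ hx' => /= hS.
  have hk := key k.
  have c0 := cw_ge0 k.
  set S := \sum_(0 <= i < k.+1) _ in hS *.
  set c := 2 * W k + T k in hS hk c0.
  have e1 : (1 - W k.+1) * S <= (1 - W k.+1) * (c * x 1%N) by apply: ler_wpM2l => //; lra.
  have e2 : (T k.+1 + W k.+1) * (alpha * x 1%N) <= (T k.+1 + W k.+1) * x 0%N.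
    by apply: ler_wpM2l; [lra| exact: h2].
  have e3 : (1 - W k.+1) * (c * x 1%N) = (T k.+1 + W k.+1) * (alpha * x 1%N).
    by transitivity (((1 - W k.+1) * c) * x 1%N); [ring| rewrite hk; ring].
  nra.
have -> : E x s.+1 0%N = x s.+1 + x 0%N by [].
have -> : \sum_(0 <= i < k.+1) P k i * E x s.+1 i.+1 =
          \sum_(0 <= i < k.+1) P k i * E (fun u => x u.+1) s i.
  by apply: eq_bigr => i _; rewrite /E eqSS.
have := IH _ s hx' sk => /= hS.
have x0s : x 0%N <= x s.+1 by apply: (mono _ _ h1).
have xs0 : 0 <= x s.+1 by lra.
set S := \sum_(0 <= i < k.+1) _ in hS *.
have e1 : (1 - W k.+1) * S <= (1 - W k.+1) * ((1 + T k) * x s.+1).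
  by apply: ler_wpM2l => //; lra.
rewrite TS. nra.
Qed.

End Seq.
Arguments E {R}.
Arguments P {R}.
Arguments T {R}.
Arguments W {R}.
Arguments WT {R}.
Arguments Hx {R}.
Arguments Al {R alpha} a0 a1 {k x s}.
Arguments mono {R x K}.
Arguments P_ge0 {R alpha} a0 a1 k u.
Arguments P_gt {R alpha k u}.
Arguments P_sum {R alpha} k.

Section Suffix.
Variable R : realType.
Variable N : nat.
Variable f : nat -> R.

Definition S u := \sum_(u <= r < N) f r.
Definition V u := Num.min (f u) (Num.max 0 (1 - S u.+1)).

Lemma S_split a b : (a <= b)%N -> (b <= N)%N -> S a = \sum_(a <= r < b) f r + S b.
Proof. by move=> ab bN; rewrite /S -big_cat_nat. Qed.

Lemma S_rec u : (u < N)%N -> S u = f u + S u.+1.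
Proof. by move=> uN; rewrite (S_split _ _ (leqnSn u) uN) big_nat1. Qed.

Lemma S_ge0 u : (forall r, 0 <= f r) -> 0 <= S u.
Proof. by move=> f0; apply: sumr_ge0 => r _. Qed.

Lemma S_anti a b : (forall r, 0 <= f r) -> (a <= b)%N -> (b <= N)%N -> S b <= S a.
Proof.
move=> f0 ab bN; rewrite (S_split _ _ ab bN) lerDr; exact: sumr_ge0.
Qed.

Lemma S_N : S N = 0.
Proof. by rewrite /S big_geq. Qed.

Lemma V_ge0 u : (forall r, 0 <= f r) -> 0 <= V u.
Proof.
move=> f0; rewrite /V; have := f0 u; set y := 1 - _.
case: (leP (f u) (Num.max 0 y)) => _ // _.
by rewrite le_max lexx.
Qed.

Lemma V_le u : V u <= f u.
Proof. by rewrite /V ge_min lexx. Qed.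

Lemma sumV k : (forall r, 0 <= f r) -> (k <= N)%N ->
  \sum_(N - k <= u < N) V u = Num.min 1 (S (N - k)%N).
Proof.
move=> f0; elim: k => [|k IH] kN.
  by rewrite subn0 big_geq // S_N; apply/esym/min_idPr; lra.
have e : ((N - k.+1).+1 = N - k)%N by rewrite subnSK.
rewrite big_ltn; last by rewrite -subn_gt0 subKn.
rewrite e IH; last exact: ltnW.
rewrite (@S_rec (N - k.+1) (_ : (N - k.+1 < N)%N)); last by rewrite -subn_gt0 subKn.
rewrite e /V e.
have s0 := S_ge0 (N - k)%N f0.
have fu := f0 (N - k.+1)%N.
move: s0 fu; set s := S (N - k)%N; set x := f (N - k.+1)%N; move=> s0 fu.
have [hs|hs] := leP 1 s.
  rewrite (max_idPl (_ : 1 - s <= 0)); last lra.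
  rewrite (min_idPr fu) add0r (min_idPl (_ : 1 <= x + s)) //; lra.
rewrite (max_idPr (_ : 0 <= 1 - s)); last lra.
have [hx|hx] := leP x (1 - s).
  rewrite (min_idPr (_ : x + s <= 1)); [ring|lra].
rewrite (min_idPl (_ : 1 <= x + s)); [ring|lra].
Qed.

Lemma V_supp u u' : (forall r, 0 <= f r) -> (u' < N)%N ->
  0 < V u -> 0 < f u' - V u' -> (u' <= u)%N.
Proof.
move=> f0 u'N hv hv'; rewrite leqNgt; apply/negP => uu'.
have h1 : 0 < Num.max 0 (1 - S u.+1).
  by move: hv; rewrite /V lt_min => /andP[].
have h2 : S u.+1 < 1.
  by move: h1; rewrite lt_max ltxx /= subr_gt0.
have h3 : S u' <= S u.+1 by exact: (S_anti _ _ f0 uu' (ltnW u'N)).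
rewrite (S_rec _ u'N) in h3.
have h4 := S_ge0 u'.+1 f0.
have : V u' = f u'.
  rewrite /V; apply/min_idPl; rewrite le_max; apply/orP; right; lra.
move=> e; move: hv'; rewrite e subrr ltxx //.
Qed.

End Suffix.
Arguments S {R} N f u.
Arguments V {R} N f u.
Arguments sumV {R N f} k.
Arguments V_supp {R N f} u u'.
Arguments V_ge0 {R N f} u.
Arguments V_le {R N f} u.

Section Veto.
Variable R : realType.
Variables (M n : nat) (pi : 'I_n -> {perm 'I_M.+1}).

Definition pos i (c : 'I_M.+1) : nat := (pi i)^-1%g c.

Lemma sum_pos i (F : nat -> R) : \sum_c F (pos i c) = \sum_(0 <= u < M.+1) F u.
Proof.
rewrite (reindex_inj (h := pi i) perm_inj) /= big_mkord.
by apply: eq_bigr => u _; rewrite /pos permK.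
Qed.

Lemma q_pos i (q : 'I_M.+1 -> R) c : q (pi i (inord (pos i c))) = q c.
Proof. by rewrite /pos inord_val permKV. Qed.

Lemma veto (s : seq 'I_n) (q : 'I_M.+1 -> R) :
  (forall c, 0 <= q c) -> \sum_c q c = (size s)%:R -> (0 < size s)%N ->
  exists a, 0 < q a /\
   forall (D : 'I_n -> 'I_M.+1 -> R) (g : 'I_n -> R) (h : 'I_M.+1 -> R),
     (forall i c, D i c <= g i + h c) ->
     (forall i c c', (pos i c <= pos i c')%N -> D i c <= D i c') ->
     \sum_(i <- s) D i a <= \sum_(i <- s) g i + \sum_c q c * h c.
Proof.
elim: s q => [|i s IH] q q0 qs // _.
set f := fun u => q (pi i (inord u)).
have f0 : forall r, 0 <= f r by move=> r; exact: q0.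
set v := fun c => V M.+1 f (pos i c).
have v0 : forall c, 0 <= v c by move=> c; exact: V_ge0.
have vq : forall c, v c <= q c.
  by move=> c; rewrite /v -(q_pos i q c); exact: V_le.
have S0 : S M.+1 f 0 = \sum_c q c.
  by rewrite /S -(sum_pos i f); apply: eq_bigr => c _; rewrite /f q_pos.
have sv : \sum_c v c = 1.
  rewrite /v (sum_pos i (V M.+1 f)).
  have := sumV M.+1 f0 (leqnn M.+1); rewrite subnn => ->.
  rewrite S0 qs /=; apply/min_idPl.
  by rewrite -[1]/(1%:R) ler_nat.
set q' := fun c => q c - v c.
have q'0 : forall c, 0 <= q' c by move=> c; rewrite /q' subr_ge0.
have sq' : \sum_c q' c = (size s)%:R.
  rewrite /q' sumrB sv qs /= -addn1 natrD; ring.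
have fin : forall a, 0 < q a -> (forall c, 0 < v c -> (pos i a <= pos i c)%N) ->
   (forall (D : 'I_n -> 'I_M.+1 -> R) (g : 'I_n -> R) (h : 'I_M.+1 -> R),
     (forall i c, D i c <= g i + h c) ->
     (forall i c c', (pos i c <= pos i c')%N -> D i c <= D i c') ->
     \sum_(i <- s) D i a <= \sum_(i <- s) g i + \sum_c q' c * h c) ->
   exists a, 0 < q a /\
   forall (D : 'I_n -> 'I_M.+1 -> R) (g : 'I_n -> R) (h : 'I_M.+1 -> R),
     (forall i c, D i c <= g i + h c) ->
     (forall i c c', (pos i c <= pos i c')%N -> D i c <= D i c') ->
     \sum_(i <- i :: s) D i a <= \sum_(i <- i :: s) g i + \sum_c q c * h c.
  move=> a qa va rest; exists a; split => // D g h hD hmono.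
  have := rest D g h hD hmono => hr.
  rewrite !big_cons.
  have e1 : D i a <= g i + \sum_c v c * h c.
    have -> : D i a = \sum_c v c * D i a by rewrite -mulr_suml sv mul1r.
    apply: (@le_trans _ _ (\sum_c v c * (g i + h c))).
      apply: ler_sum => c _.
      have [vz|vp] := eqVneq (v c) 0; first by rewrite vz !mul0r.
      have vp' : 0 < v c by rewrite lt_def vp v0.
      apply: ler_wpM2l; first exact: v0.
      apply: le_trans (hD i c); apply: hmono; exact: va.
    rewrite (eq_bigr (fun c => g i * v c + v c * h c)); last by move=> c _; ring.
    by rewrite big_split /= -mulr_sumr sv mulr1.
  have e2 : \sum_c q c * h c = \sum_c q' c * h c + \sum_c v c * h c.
    by rewrite -big_split /=; apply: eq_bigr => c _; rewrite /q'; ring.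
  rewrite e2; lra.
case: s IH qs q'0 sq' fin => [|j s] IH qs q'0 sq' fin.
  have q'z : forall c, q' c = 0.
    move=> c; apply: (psumr_eq0P (P := xpredT)) => // c' _.
  have [c0 hc0] : exists c, 0 < q c.
    case: (pickP (fun c => 0 < q c)) => [c hc|hn]; first by exists c.
    have : \sum_c q c = 0.
      apply: big1 => c _; apply/eqP; rewrite eq_le q0 andbT.
      by move: (hn c) => /negbT; rewrite -leNgt.
    by rewrite qs /= => /eqP; rewrite oner_eq0.
  case: (@arg_minnP _ c0 (fun c => 0 < q c) (fun c => pos i c) hc0) => a qa amin.
  apply: (fin a qa).
    move=> c vc; apply: amin; exact: lt_le_trans vc (vq c).
  move=> D g h _ _; rewrite !big_nil add0r; apply: sumr_ge0 => c _.
  by rewrite q'z mul0r.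
have [a [qa' ha]] := IH q' q'0 sq' (ltn0Sn _).
have qa : 0 < q a by move: qa'; rewrite /q' subr_gt0; apply: le_lt_trans; exact: v0.
apply: (fin a qa _ ha) => c vc.
apply: (V_supp _ _ f0 (ltn_ord ((pi i)^-1%g a)) vc).
by rewrite /f -/(pos i a) q_pos.
Qed.

End Veto.

Lemma agent (R : realType) (alpha : R) (a0 : 0 <= alpha) (a1 : alpha <= 1)
  (M : nat) (pi : {perm 'I_M.+1}) (x : nat -> R) (y : 'I_M.+1 -> R) (l s : nat) :
  (1 <= l)%N -> (l <= M)%N -> (s < M.+1)%N ->
  (forall u, (u < M)%N -> x u <= x u.+1) ->
  (forall u, (u < l)%N -> alpha * x u.+1 <= x u) ->
  ((l < M)%N -> x l <= alpha * x l.+1) -> 0 <= x 0%N ->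
  (forall u : 'I_M.+1, y (pi u) <= E x s u) ->
  \sum_c P alpha l ((pi^-1)%g c) * y c <= (1 + Num.max alpha (T alpha l)) * x s.
Proof.
move=> l1 lM sM h1 h2 h3 h4 hy.
rewrite (reindex_inj (h := pi) perm_inj) /=.
under eq_bigr do rewrite permK.
apply: (@le_trans _ _ (\sum_(u < M.+1) P alpha l u * E x s u)).
  apply: ler_sum => u _; apply: ler_wpM2l; [exact: P_ge0|exact: hy].
rewrite -(big_mkord xpredT (fun u => P alpha l u * E x s u)).
rewrite (@big_cat_nat _ _ _ l.+1) /=; [|by []|by rewrite ltnS].
have -> : \sum_(l.+1 <= u < M.+1) P alpha l u * E x s u = 0.
  rewrite big_nat_cond big1 // => u /andP[/andP[lu _] _].
  by rewrite P_gt // mul0r.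
rewrite addr0.
have xs0 : 0 <= x s by apply: le_trans h4 (mono h1 _ _ (leq0n s) _).
have hx : Hx alpha x l.
  split; [move=> u ul; apply: h1; exact: leq_trans ul lM | exact: h2 | exact: h4].
have [sl|ls] := leqP s l.
  apply: le_trans (Al a0 a1 hx sl) _.
  by apply: ler_wpM2r => //; rewrite lerD2l le_max lexx orbT.
apply: (@le_trans _ _ (\sum_(0 <= u < l.+1) P alpha l u * ((1 + alpha) * x s))).
  rewrite big_nat_cond [X in _ <= X]big_nat_cond.
  apply: ler_sum => u /andP[/andP[_ ul] _]; apply: ler_wpM2l; first exact: P_ge0.
  have us : u != s by rewrite neq_ltn (leq_trans ul ls).
  rewrite /E (negPf us).
  have e1 : x u <= x l by apply: (mono h1) => //; rewrite -ltnS.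
  have e2 : x l.+1 <= x s by apply: (mono h1) => //; rewrite -ltnS.
  have e3 := h3 (leq_trans ls (ltnSE sM)).
  have e4 : alpha * x l.+1 <= alpha * x s by apply: ler_wpM2l.
  lra.
rewrite -mulr_suml P_sum mul1r; apply: ler_wpM2r => //.
by rewrite lerD2l le_max lexx.
Qed.

Lemma size_ie n : size (index_enum 'I_n) = n.
Proof. by rewrite /index_enum unlock -enumT size_enum_ord. Qed.

Lemma moderate_uniq m (J : 'I_m.-1 -> bool) k1 k2 :
  moderate_upto J k1 -> moderate_upto J k2 -> k1 = k2.
Proof.
wlog: k1 k2 / (k1 <= k2)%N.
  move=> H h1 h2; case: (leqP k1 k2) => k12; first exact: H.
  by apply/esym; apply: H => //; exact: ltnW.
move=> k12 [_ h1 _ h4] [_ h2 h3 _].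
move: k12; rewrite leq_eqVlt => /orP[/eqP -> //|k12'].
have k1m : (k1 < m.-1)%N by apply: leq_trans k12' h2.
have := h4 (Ordinal k1m) erefl.
by rewrite h3.
Qed.

Lemma P_sum_full (R : realType) (alpha : R) (a0 : 0 <= alpha) (a1 : alpha <= 1) k M :
  (k <= M)%N -> \sum_(0 <= u < M.+1) P alpha k u = 1.
Proof.
move=> kM.
rewrite (@big_cat_nat _ _ _ k.+1) //=.
rewrite P_sum // big_nat_cond big1 ?addr0 // => u /andP[/andP[ku _] _].
exact: P_gt.
Qed.

Lemma T_step (R : realType) (alpha : R) (a0 : 0 <= alpha) (a1 : alpha <= 1) k :
  T alpha k <= T alpha k.+1.
Proof.
rewrite TS.
have [w0 w1 _ _] := inv_bounds _ _ a0 a1 k.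
have t1 : T alpha k <= 1.
  by case: (k) => [|k0]; [rewrite T0; lra| case: (inv_bounds _ _ a0 a1 k0)].
nra.
Qed.

Lemma T_mono (R : realType) (alpha : R) (a0 : 0 <= alpha) (a1 : alpha <= 1) k k' :
  (k <= k')%N -> T alpha k <= T alpha k'.
Proof.
move=> kk; apply: (@mono _ (T alpha) k') => // u _; exact: T_step.
Qed.

Section Main.
Variable R : realType.
Variable alpha : R.
Hypothesis a0 : 0 <= alpha.
Hypothesis a1 : alpha <= 1.
Ltac hyps := have ? := a0; have ? := a1.
Variable m' : nat.
Local Notation m := m'.+2.
Variable n : nat.
Variable sigma : 'I_n -> pref m.

Definition xd (d : 'I_n + 'I_m -> 'I_n + 'I_m -> R) i u :=
  d (inl i) (inr ((sigma i).1 (inord u))).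

Lemma link d i u : alpha_consistent alpha sigma d -> (u < m'.+1)%N ->
  if (sigma i).2 (inord u) then xd d i u <= alpha * xd d i u.+1
  else (xd d i u <= xd d i u.+1) && (alpha * xd d i u.+1 < xd d i u).
Proof.
move=> hc um; have := hc i (inord u) => /=.
have e1 : @pos_lo m (inord u) = inord u :> 'I_m.
  by apply: val_inj; rewrite /= !inordK // ltnW.
have e2 : @pos_hi m (inord u) = inord u.+1 :> 'I_m.
  by apply: val_inj; rewrite /= !inordK.
by rewrite e1 e2.
Qed.

Lemma xd_step d i u : is_metric d -> alpha_consistent alpha sigma d -> (u < m'.+1)%N ->
  xd d i u <= xd d i u.+1.
Proof.
move=> [h0 _ _ _] hc um; have := link d i u hc um.
case: ((sigma i).2 _); last by case/andP.
move=> h; apply: le_trans h _.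
have := h0 (inl i) (inr ((sigma i).1 (inord u.+1))).
rewrite -/(xd d i u.+1) => hx; hyps; nra.
Qed.


Definition piS i : {perm 'I_m} := (sigma i).1.

Lemma xd_pos d i c : xd d i (@pos _ _ piS i c) = d (inl i) (inr c).
Proof. by rewrite /xd /pos inord_val /piS permKV. Qed.

Lemma core (l : 'I_n -> nat) : (forall i, moderate_upto (sigma i).2 (l i)) ->
  exists a : 'I_m, forall d, is_metric d -> alpha_consistent alpha sigma d ->
    forall b, cost d a <= (2 + Num.max alpha (t_seq alpha (\max_(i < n) l i)%N)) * cost d b.
Proof.
hyps.
move=> hmod.
set L := (\max_(i < n) l i)%N.
set Mx := Num.max alpha (t_seq alpha L).
have Mx0 : alpha <= Mx by rewrite /Mx le_max lexx.
have [n0|npos] := posnP n.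
  exists ord0 => d _ _ b.
  have z : forall F : 'I_n -> R, \sum_(i < n) F i = 0.
    move=> F; apply: big1 => i _.
    have : (i < 0)%N by rewrite -n0 ltn_ord.
    by [].
  by rewrite /cost !z mulr0.
set q := fun c => \sum_j P alpha (l j) (@pos _ _ piS j c).
have q0 : forall c, 0 <= q c.
  by move=> c; apply: sumr_ge0 => j _; exact: P_ge0.
have hl : forall j, (1 <= l j)%N /\ (l j <= m'.+1)%N.
  by move=> j; case: (hmod j).
have qs : \sum_c q c = (size (index_enum 'I_n))%:R.
  rewrite size_ie /q exchange_big /=.
  rewrite (eq_bigr (fun _ => 1)); first by rewrite sumr_const card_ord.
  move=> j _; rewrite (sum_pos R m'.+1 n piS j (P alpha (l j))).
  by apply: P_sum_full => //; case: (hl j).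
have sz : (0 < size (index_enum 'I_n))%N by rewrite size_ie.
have [a [qa ha]] := veto R m'.+1 n piS (index_enum 'I_n) q q0 qs sz.
exists a => d hm hc b.
have [hm0 hmsym hmtri hmdiag] := hm.
have hmono : forall i c c', (@pos _ _ piS i c <= @pos _ _ piS i c')%N ->
    d (inl i) (inr c) <= d (inl i) (inr c').
  move=> i c c' cc'; rewrite -!xd_pos.
  apply: (@mono _ (xd d i) m'.+1) => //; last by rewrite -ltnS ltn_ord.
  move=> u um; exact: xd_step.
have := ha (fun i c => d (inl i) (inr c)) (fun i => d (inl i) (inr b))
   (fun c => d (inr b) (inr c)) (fun i c => hmtri _ _ _) hmono.
rewrite -/(cost d a) -/(cost d b) => hv.
suff hq : \sum_c q c * d (inr b) (inr c) <= (1 + Mx) * cost d b by lra.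
rewrite /q.
under eq_bigr do rewrite mulr_suml.
rewrite exchange_big /= /cost mulr_sumr.
apply: ler_sum => j _.
have [l1 lM] := hl j.
have [_ _ hJf hJt] := hmod j.
have Lj : (l j <= L)%N by rewrite /L; exact: (leq_bigmax j).
have L1 : (0 < L)%N by apply: leq_trans Lj.
have tL : t_seq alpha L = T alpha L.
  by rewrite /t_seq wt_WT // prednK.
have hag := agent R alpha a0 a1 m'.+1 (piS j) (xd d j) (fun c => d (inr b) (inr c))
   (l j) (@pos _ _ piS j b) l1 lM (ltn_ord _).
apply: le_trans (hag _ _ _ _ _) _.
- move=> u um; exact: xd_step.
- move=> u ul.
  have um : (u < m'.+1)%N by apply: leq_trans ul lM.
  have := link d j u hc um.
  rewrite hJf; last by rewrite /= inordK.
  by case/andP => _ /ltW.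
- move=> lm; have := link d j (l j) hc lm.
  by rewrite hJt //= inordK.
- exact: hm0.
- move=> u; rewrite /E.
  case: eqP => [eu|neu].
    have -> : piS j u = b.
      have -> : u = ((piS j)^-1)%g b by apply: val_inj; rewrite /= eu.
      by rewrite permKV.
    by rewrite hmdiag.
  rewrite xd_pos /xd inord_val.
  apply: le_trans (hmtri _ (inl j) _) _.
  by rewrite hmsym.
rewrite xd_pos; apply: ler_wpM2r; first exact: hm0.
rewrite lerD2l /Mx tL ge_max le_max lexx /= le_max.
by rewrite (T_mono _ _ a0 a1 _ _ Lj) orbT.
Qed.

End Main.
Theorem theorem4 (R : realType) (m : nat) (alpha : R) :
  (2 <= m)%N -> 0 <= alpha <= 1 ->
  exists f : forall n : nat, ('I_n -> pref m) -> 'I_m,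
    forall (n : nat) (sigma : 'I_n -> pref m) (l : 'I_n -> nat),
      (forall i : 'I_n, moderate_upto (sigma i).2 (l i)) ->
      (dist_alpha alpha sigma (f n sigma)
         <= (2 + Num.max alpha (t_seq alpha (\max_(i < n) l i)%N))%:E)%E.
Proof.
move=> hm /andP[a0 a1].
case: m hm => [|[|m']] // _.
pose Good n (s : 'I_n -> pref m'.+2) (a : 'I_m'.+2) :=
  forall l, (forall i, moderate_upto (s i).2 (l i)) ->
  forall d, is_metric d -> alpha_consistent alpha s d ->
  forall b, cost d a <= (2 + Num.max alpha (t_seq alpha (\max_(i < n) l i)%N)) * cost d b.
have ex : forall n s, exists a, Good n s a.
  move=> n s.
  case: (classic (exists l : 'I_n -> nat, forall i, moderate_upto (s i).2 (l i))) => [[l0 h0]|hn].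
    have [a ha] := @core R alpha a0 a1 m' n s l0 h0.
    exists a => l hl.
    have -> : l = l0 by apply: boolp.funext => i; exact: moderate_uniq (hl i) (h0 i).
    exact: ha.
  by exists ord0 => l hl; exfalso; apply: hn; exists l.
exists (fun n s => epsilon (inhabits ord0) (Good n s)).
move=> n s l hl.
have hG := epsilon_spec (inhabits ord0) (Good n s) (ex n s).
set a := epsilon _ _ in hG *.
apply: ge_ereal_sup => _ [d [hmet hc ->]].
rewrite lee_fin.
have hb := hG l hl d hmet hc.
set B := 2 + _ in hb *.
have B1 : 1 <= B.
  rewrite /B; have : 0 <= Num.max alpha (t_seq alpha (\max_(i < n) l i)%N).
    by rewrite le_max a0.
  lra.
have [hm0 _ _ _] := hmet.
have c0 : forall b, 0 <= cost d b by move=> b; apply: sumr_ge0 => i _.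
have key : cost d a <= B * opt_cost d a.
  rewrite /opt_cost; apply: (big_ind (fun y => cost d a <= B * y)).
  - have := c0 a; nra.
  - by move=> y z hy hz; case: (leP y z).
  - by move=> b _; exact: hb.
have [o0|o0] := leP (opt_cost d a) 0.
  have e : cost d a = 0.
    apply/eqP; rewrite eq_le c0 andbT.
    apply: le_trans key _; have := c0 a; nra.
  by rewrite e mul0r; lra.
by rewrite ler_pdivrMr // mulrC.
Qed.
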